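(* Let $n \geqslant 1$ and let $\lambda$ be an integer partition with $\lambda_1+\ell(\lambda)-1=n$. Let $c=(1,2,\ldots,n+1)\in\mathfrak{S}_{n+1}$ (an $(n+1)$-cycle). Then $\mathcal{RSK}_{\lambda,c}$ coincides with the Hillman–Grassl correspondence $\mathcal{HG}_\lambda$.
   Context: Ferrers diagram $\mathrm{Fer}(\lambda)=\{(i,j)\in(\mathbb{N}^* )^2:j\le\lambda_i\}$. Diagonals: $D_k(\lambda)=\{(i,j)\in\mathrm{Fer}(\lambda):\lambda_1+i-j=k\}$ for $k=1,\dots,n$, $\delta_k=\max\{\min(i,j):(i,j)\in D_k(\lambda)\}$, and $(i,j)\in D_k(\lambda)$ has coordinates $\langle k,\delta\rangle_\lambda$ with $\delta=\delta_k-\min(i,j)+1$. $\square_k(\lambda)$ is the order ideal of $\mathrm{Fer}(\lambda)$ (componentwise order) generated by $D_k(\lambda)$. Row/column labels: label the unit segments of the south-east boundary of $\mathrm{Fer}(\lambda)$ by $1,\dots,n+1$ from top-right to bottom-left; rows and columns inherit the labels of their boundary segments; $\mathbf L$ = row labels, $\mathbf R$ = column labels; $[\ell,r]$ denotes the box with row label $\ell$ and column label $r$ (it exists iff $\ell<r$). Greene–Kleitman invariant: for an acyclic directed graph $G$ and $g:G_0\to\mathbb{N}$, $M_t$ ($t\ge1$) is the maximum over $t$-tuples of (possibly one-vertex) directed paths of the sum of $g$ over the union of their vertex sets, $M_0=0$, $\mathrm{GK}_G(g)=(M_t-M_{t-1})_{t\ge1}$. Hillman–Grassl correspondence (in the form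 used here): let $H_\lambda$ be the directed graph on $\mathrm{Fer}(\lambda)$ with arrows $(i,j)\to(i,j+1)$ and $(i+1,j)\to(i,j)$; for a filling $f$, $\mathcal{HG}_\lambda(f)(\langle k,\delta\rangle_\lambda)$ is the $\delta$-th part of $\mathrm{GK}$ of $f$ restricted to the full subgraph of $H_\lambda$ on $\square_k(\lambda)$. $\mathcal{RSK}_{\lambda,c}$: $\mathrm{AR}(c)$ is the directed graph on transpositions $(i,j)$, $1\le i<j\le n+1$, with arrows $(i,j)\to(i,c(j))$ if $i<c(j)$ and $(i,j)\to(c(i),j)$ if $c(i)<j$; $\mathrm{AR}^{[k]}(c)$ is its full subgraph on $(\ell,r)$ with $\ell\le k<r$. For a filling $f$ of $\lambda$, $\mathrm{rep}_{\lambda,c}(f)(\ell,r)=f([\ell,r])$ if $\ell\in\mathbf L,r\in\mathbf R,\ell<r$ and $0$ otherwise; $\mathcal{RSK}_{\lambda,c}(f)(\langle k,\delta\rangle_\lambda)$ is the $\delta$-th part of $\mathrm{GK}_{\mathrm{AR}^{[k]}(c)}$ of the restriction of $\mathrm{rep}_{\lambda,c}(f)$ to $\mathrm{AR}^{[k]}(c)$. *)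

(* Defs.v *)
From mathcomp Require Import all_boot.
From mathcomp Require Import boolp.
Set Implicit Arguments. Unset Strict Implicit. Unset Printing Implicit Defensive.

Section GK.
Variable T : finType.

Definition dpath (A : {set T}) (e : rel T) (p : seq T) : bool :=
  if p is x :: q then path e x q && all (fun v => v \in A) p else false.

Definition union_of_paths (A : {set T}) (e : rel T) (t : nat) (S : {set T}) : Prop :=
  exists ps : seq (seq T),
    [/\ size ps = t, all (dpath A e) ps & S = [set v | has (fun p => v \in p) ps]].

Definition GK_M (A : {set T}) (e : rel T) (g : T -> nat) (t : nat) : nat :=
  \max_(S : {set T} | `[< union_of_paths A e t S >]) \sum_(v in S) g v.

(* the d-th part (d >= 1) of GK_G(g) = (M_t - M_{t-1})_{t>=1} *)
Definition GK_part (A : {set T}) (e : rel T) (g : T -> nat) (d : nat) : nat :=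
  GK_M A e g d - GK_M A e g d.-1.
End GK.

Definition is_partition (lam : seq nat) : bool :=
  sorted geq lam && (0 \notin lam).

(* Ambient finite type: pairs of integers in {0,..,n+1}; it contains all boxes
   of Fer(lam) and all transpositions (i,j), 1 <= i < j <= n+1. *)
Notation cell n := ('I_n.+2 * 'I_n.+2)%type.

(* lam_i, 1-indexed *)
Definition part (lam : seq nat) (i : nat) : nat := nth 0 lam i.-1.

Definition inFer (lam : seq nat) (i j : nat) : bool :=
  (0 < i <= size lam) && (0 < j <= part lam i).

Definition cinFer n (lam : seq nat) (x : cell n) : bool := inFer lam x.1 x.2.

(* k such that (i,j) in D_k: lam_1 + i - j *)
Definition diagk (lam : seq nat) (i j : nat) : nat := head 0 lam + i - j.

Definition inD n (lam : seq nat) (k : nat) (x : cell n) : bool :=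
  cinFer lam x && (diagk lam x.1 x.2 == k).

Definition delta_k n (lam : seq nat) (k : nat) : nat :=
  \max_(x : cell n | inD lam k x) minn x.1 x.2.

(* For (i,j) = <k,delta>_lam: k and delta *)
Definition coord_k n (lam : seq nat) (x : cell n) : nat := diagk lam x.1 x.2.
Definition coord_delta n (lam : seq nat) (x : cell n) : nat :=
  @delta_k n lam (coord_k lam x) - minn x.1 x.2 + 1.

Definition square_k n (lam : seq nat) (k : nat) : {set cell n} :=
  [set y : cell n | cinFer lam y &&
     [exists x : cell n, inD lam k x && (y.1 <= x.1) && (y.2 <= x.2)]].

Definition Hedge n : rel (cell n) := fun x y =>
  ((y.1 == x.1 :> nat) && (y.2 == x.2.+1 :> nat)) ||
  ((y.2 == x.2 :> nat) && (x.1 == y.1.+1 :> nat)).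

(* fillings: f : nat * nat -> nat, only the values on Fer(lam) matter *)
Definition HG n (lam : seq nat) (f : nat * nat -> nat) (x : cell n) : nat :=
  GK_part (@square_k n lam (coord_k lam x)) (@Hedge n)
          (fun y : cell n => f (nat_of_ord y.1, nat_of_ord y.2))
          (@coord_delta n lam x).

(* Unit segments of the south-east boundary of Fer(lam), listed from
   top-right to bottom-left: (true, i) = the vertical segment ending row i,
   (false, j) = the horizontal segment ending column j.  With lam_0 := lam_1
   and lam_{l+1} := 0, the boundary consists, for i = 1, ..., l(lam)+1, of the
   horizontal segments of columns lam_{i-1}, lam_{i-1}-1, ..., lam_i + 1,
   followed (if i <= l(lam)) by the vertical segment of row i. *)
Definition cols_between (a b : nat) : seq (bool * nat) :=
  [seq (false, j) | j <- rev (iota b.+1 (a - b))].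

Definition boundary (lam : seq nat) : seq (bool * nat) :=
  flatten [seq cols_between (part lam i.-1) (part lam i) ++
               (if i <= size lam then [:: (true, i)] else [::])
          | i <- iota 1 (size lam).+1].

(* the segment labelled l (labels 1, ..., n+1) *)
Definition segment (lam : seq nat) (l : nat) : bool * nat :=
  nth (false, 0) (boundary lam) l.-1.

Definition rep (lam : seq nat) (f : nat * nat -> nat) (l r : nat) : nat :=
  if (0 < l < r) && (r <= size (boundary lam)) then
    match segment lam l, segment lam r with
    | (true, i), (false, j) => f (i, j)
    | _, _ => 0
    end
  else 0.

(* c : a permutation of {1,...,n+1}, given as a function on nat *)
Definition ARedge n (c : nat -> nat) : rel (cell n) := fun x y =>
  ((y.1 == x.1 :> nat) && (y.2 == c x.2 :> nat) && (x.1 < c x.2)) ||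
  ((y.2 == x.2 :> nat) && (y.1 == c x.1 :> nat) && (c x.1 < x.2)).

(* vertices of AR^[k](c): transpositions (l,r), 1 <= l <= k < r <= n+1 *)
Definition ARk n (k : nat) : {set cell n} :=
  [set x : cell n | (0 < x.1 <= k) && (k < x.2 <= n.+1)].

Definition RSK n (lam : seq nat) (c : nat -> nat) (f : nat * nat -> nat)
    (x : cell n) : nat :=
  GK_part (@ARk n (coord_k lam x)) (@ARedge n c)
          (fun y : cell n => rep lam f y.1 y.2)
          (@coord_delta n lam x).

Definition cyc (n : nat) (m : nat) : nat := if m <= n then m.+1 else 1.

(* Main.v *)
Require Import Defs.
From mathcomp Require Import all_boot.
From mathcomp Require Import boolp.
From mathcomp Require Import zify.
Set Implicit Arguments. Unset Strict Implicit. Unset Printing Implicit Defensive.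

Section Generic.
Variable T : finType.

Definition conn (A : {set T}) (e : rel T) (u w : T) : Prop :=
  exists q, [/\ path e u q, all (fun v => v \in A) q & last u q = w].

Lemma conn_refl (A : {set T}) (e : rel T) u : conn A e u u. Proof. by exists [::]. Qed.

Lemma conn_step (A : {set T}) (e : rel T) u v w : e u v -> v \in A -> conn A e v w -> conn A e u w.
Proof.
move=> euv vA [q [pq aq lq]]; exists (v :: q); split => //=.
- by rewrite euv pq.
- by rewrite vA aq.
Qed.

Lemma refine_sorted (A : {set T}) (e : rel T) (R : rel T) (s : seq T) x :
  (forall u w, u \in A -> w \in A -> R u w -> conn A e u w) ->
  path R x s -> x \in A -> all (fun v => v \in A) s ->
  exists q, [/\ path e x q, all (fun v => v \in A) q & {subset x :: s <= x :: q}].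
Proof.
move=> Hc; elim: s x => [|y s IH] x /=.
  by move=> _ _ _; exists [::]; split.
case/andP=> Rxy ps xA /andP[yA sA].
have [q1 [p1 a1 l1]] := Hc _ _ xA yA Rxy.
have [q2 [p2 a2 s2]] := IH y ps yA sA.
exists (q1 ++ q2); split.
- by rewrite cat_path p1 l1 p2.
- by rewrite all_cat a1 a2.
- move=> v; rewrite !inE => /orP[->//|/s2].
  rewrite inE => /orP[/eqP->|vq2].
    have := mem_last x q1; rewrite l1 inE => /orP[->//|yq1].
    by rewrite mem_cat yq1 orbT.
  by rewrite mem_cat vq2 !orbT.
Qed.

Lemma path_in_sorted (A : {set T}) (e : rel T) (O : rel T) x q :
  (forall u v, u \in A -> v \in A -> e u v -> O u v) ->
  path e x q -> all (fun v => v \in A) (x :: q) ->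
  path [rel u v | [&& u \in A, v \in A & O u v]] x q.
Proof.
move=> He; elim: q x => [|y q IH] x //=.
case/andP=> exy pq /and3P[xA yA aq].
by rewrite xA yA (He _ _ xA yA exy) /= IH //= yA.
Qed.

Lemma transfer (A : {set T}) (e : rel T) (g : T -> nat) (A' : {set T}) (e' : rel T) (phi : T -> T) (O : rel T) a0 :
  transitive O ->
  a0 \in A' ->
  (forall x y, x \in A -> y \in A -> e x y -> O x y) ->
  (forall x, x \in A -> g x != 0 -> phi x \in A') ->
  (forall x y, x \in A -> y \in A -> g x != 0 -> g y != 0 -> O x y ->
     conn A' e' (phi y) (phi x)) ->
  forall p, dpath A e p ->
  exists p', dpath A' e' p' /\ (forall v, v \in p -> g v != 0 -> phi v \in p').
Proof.
move=> trO a0A He HA Hc [|x q] //= /andP[pq aq].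
set O' := [rel u v | [&& u \in A, v \in A & O u v]].
have trO' : transitive O'.
  move=> b a c /and3P[aA bA Oab] /and3P[_ cA Obc].
  by rewrite /= aA cA (trO _ _ _ Oab Obc).
have sO : sorted O' (x :: q) by exact: path_in_sorted He pq aq.
set s := [seq v <- x :: q | g v != 0].
have sOs : sorted O' s by exact: sorted_filter.
have sA : all (fun v => (v \in A) && (g v != 0)) s.
  rewrite all_filter; apply/allP => v vq; apply/implyP => gv.
  by rewrite gv andbT; have aq' : all (fun v => v \in A) (x :: q) := aq; move/allP: aq' => /(_ v vq).
set R := fun u w => `[< conn A' e' u w >].
have sR : sorted R (rev (map phi s)).
  rewrite rev_sorted sorted_map.
  move: sOs sA; case: s => [|y s'] //=.
  elim: s' y => [|z s' IH] y //=.
  case/andP=> /and3P[yA zA Oyz] ps /and3P[/andP[_ gy] /andP[_ gz] as'].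
  rewrite IH ?zA ?gz ?as' // andbT.
  by apply/asboolP; apply: Hc.
have tA : all (fun v => v \in A') (rev (map phi s)).
  rewrite all_rev all_map; apply/allP => v vs.
  by move/allP: sA => /(_ v vs) /andP[vA gv] /=; apply: HA.
case E: (rev (map phi s)) sR tA => [|y t] sR tA.
  exists [:: a0]; split; first by rewrite /= a0A.
  move=> v vq gv; have : phi v \in rev (map phi s).
    by rewrite mem_rev; apply: map_f; rewrite mem_filter gv.
  by rewrite E.
move: sR tA => /= sR /andP[yA tA].
have [q' [pq' aq' sub]] := refine_sorted (R := R) (e := e') (A := A')
   (fun u w _ _ H => asboolW H) sR yA tA.
exists (y :: q'); split; first by rewrite /= pq' yA aq'.
move=> v vq gv; apply: sub; rewrite -E mem_rev; apply: map_f.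
by rewrite mem_filter gv.
Qed.

Lemma dpath_in (A : {set T}) (e : rel T) p : dpath A e p -> forall v, v \in p -> v \in A.
Proof.
case: p => [|a p] //= /andP[_ ap] v vp.
have ap' : all (fun v => v \in A) (a :: p) := ap.
by move/allP: ap' => /(_ v vp).
Qed.

Lemma GK_M_mono (A : {set T}) (e : rel T) (g : T -> nat) (A' : {set T}) (e' : rel T)
   (g' : T -> nat) (phi : T -> T) t :
  (forall p, dpath A e p ->
    exists p', dpath A' e' p' /\ (forall v, v \in p -> g v != 0 -> phi v \in p')) ->
  {in [pred x | (x \in A) && (g x != 0)] &, injective phi} ->
  (forall x, x \in A -> g x != 0 -> g' (phi x) = g x) ->
  GK_M A e g t <= GK_M A' e' g' t.
Proof.
move=> Htr Hinj Hg.
apply/bigmax_leqP => S /asboolP [ps [sz aps ->]].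
have [ps' [sz' aps' Hps]] : exists ps', [/\ size ps' = size ps, all (dpath A' e') ps' &
   forall p v, p \in ps -> v \in p -> g v != 0 -> has (fun p' => phi v \in p') ps'].
  elim: ps {sz} aps => [|p ps IH] /=; first by move=> _; exists [::].
  case/andP=> dp aps; have [ps' [s1 a1 H1]] := IH aps.
  have [p' [dp' Hp']] := Htr p dp.
  exists (p' :: ps'); split => /=; first by rewrite s1.
    by rewrite dp' a1.
  move=> p0 v; rewrite inE => /orP[/eqP->|p0ps] vp gv.
    by rewrite Hp'.
  by rewrite (H1 p0) ?orbT.
set S' := [set v | has (fun p => v \in p) ps'].
apply: leq_trans (leq_bigmax_cond (P := fun S => `[< union_of_paths A' e' t S >])
   (F := fun S => \sum_(v in S) g' v) S' _); last first.
  by apply/asboolP; exists ps'; split => //; rewrite sz' sz.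
set S0 := [set v | has (fun p => v \in p) ps].
have S0A : forall v, v \in S0 -> v \in A.
  move=> v; rewrite inE => /hasP [p pps vp].
  by move/allP: aps => /(_ p pps) /dpath_in; apply.
rewrite (bigID (fun v => g v == 0)) /= big1 ?add0n; last by move=> v /andP[_ /eqP].
set X := [set v | (v \in S0) && (g v != 0)].
have -> : \sum_(i in S0 | g i != 0) g i = \sum_(i in X) g' (phi i).
  rewrite [RHS](eq_bigl (fun i => (i \in S0) && (g i != 0))); last by move=> i; rewrite inE.
  apply: eq_bigr => i /andP[iS gi]; by rewrite Hg // S0A.
rewrite -big_imset /=; last first.
  have XA : forall v, v \in X -> v \in [pred x | (x \in A) && (g x != 0)].
    by move=> v; rewrite [in X in X -> _]inE => /andP[vS gv]; rewrite inE gv S0A.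
  by move=> a b aX bX; apply: Hinj; apply: XA.
have sub : phi @: X \subset S'.
  apply/subsetP => w /imsetP [v]; rewrite inE => /andP[vS gv] ->.
  move: vS; rewrite inE => /hasP [p pps vp].
  by rewrite /S' inE; apply: (Hps p) gv.
rewrite [X in _ <= X](big_setID (phi @: X)) /= (setIidPr sub).
exact: leq_addr.
Qed.
End Generic.

Fixpoint bd (i p : nat) (s : seq nat) : seq (bool * nat) :=
  match s with
  | [::] => cols_between p 0
  | x :: s' => cols_between p x ++ (true, i) :: bd i.+1 x s'
  end.

Lemma size_cols a b : size (cols_between a b) = a - b.
Proof. by rewrite /cols_between size_map size_rev size_iota. Qed.

Lemma nth_cols a b m d : m < a - b -> nth d (cols_between a b) m = (false, a - m).
Proof.
move=> mlt; rewrite /cols_between (nth_map 0) ?size_rev ?size_iota //.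
rewrite nth_rev ?size_iota // nth_iota; last by lia.
congr (_, _); lia.
Qed.

Lemma boundary_bd lam : boundary lam = bd 1 (head 0 lam) lam.
Proof.
have gen : forall d m, size lam = m + d ->
  flatten [seq cols_between (part lam i.-1) (part lam i) ++
               (if i <= size lam then [:: (true, i)] else [::])
          | i <- iota m.+1 d.+1] = bd m.+1 (part lam m) (drop m lam).
  elim=> [|d IH] m sz.
    rewrite addn0 in sz; rewrite /= cats0 drop_oversize; last by rewrite sz.
    by rewrite sz ltnn cats0 [part lam m.+1]/part nth_default //= sz.
  rewrite (drop_nth 0); last by lia.
  have -> : iota m.+1 d.+2 = [:: m.+1] ++ iota m.+2 d.+1 by [].
  rewrite map_cat flatten_cat (IH m.+1); last by lia.
  rewrite /= cats0.
  rewrite ifT; last by lia.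
  by rewrite -catA /= /part /=.
by rewrite /boundary (gen (size lam) 0) // drop0 /part /= nth0.
Qed.

Section Bd.
Lemma path_all p s : path geq p s -> all (fun y => y <= p) s.
Proof.
move=> ps; have := order_path_min (leT := geq) _ ps.
by apply; move=> a b c /= ba cb; exact: leq_trans cb ba.
Qed.

Lemma count0 j s : all (fun y => y < j) s -> count (fun y => j <= y) s = 0.
Proof. by elim: s => //= y s IH /andP[yj ys]; rewrite IH // leqNgt yj. Qed.

Lemma size_bd i p s : path geq p s -> size (bd i p s) = p + size s.
Proof.
elim: s i p => [|x s IH] i p /=; first by rewrite size_cols subn0 addn0.
case/andP=> xp ps; rewrite size_cat size_cols /= IH //; lia.
Qed.

Lemma nth_bd_row i p s a d : path geq p s -> a < size s ->
  nth d (bd i p s) (p - nth 0 s a + a) = (true, i + a).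
Proof.
elim: s i p a => [|x s IH] i p a //= /andP[xp ps] aS.
rewrite nth_cat size_cols.
case: a aS => [|a] aS /=.
  by rewrite addn0 ltnn subnn addn0.
have al : nth 0 s a <= x by move/allP: (path_all ps); apply; rewrite mem_nth.
rewrite ifN; last by lia.
have -> : p - nth 0 s a + a.+1 - (p - x) = (x - nth 0 s a + a).+1 by lia.
by rewrite /= IH // addSnnS.
Qed.

Lemma nth_bd_col i p s j d : path geq p s -> 0 < j <= p ->
  nth d (bd i p s) (p - j + count (fun y => j <= y) s) = (false, j).
Proof.
elim: s i p => [|x s IH] i p /= => [_ jp|/andP[xp ps] jp].
  by rewrite addn0 nth_cols; [congr (_,_); lia | lia].
rewrite nth_cat size_cols.
case: (leqP j x) => jx.
  rewrite ifN; last by lia.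
  have -> : p - j + (true + count (fun y => j <= y) s) - (p - x)
            = (x - j + count (fun y => j <= y) s).+1 by lia.
  rewrite /= IH //; case/andP: jp => -> _; exact: jx.
rewrite count0; last first.
  by apply/allP => y ys; move/allP: (path_all ps) => /(_ y ys) yx; lia.
rewrite /= addn0 ifT; last by lia.
by rewrite nth_cols; [congr (_,_); lia | lia].
Qed.

Lemma bd_inv p s m : path geq p s -> m < p + size s ->
  (exists2 a, a < size s & m = p - nth 0 s a + a) \/
  (exists2 j, 0 < j <= p & m = p - j + count (fun y => j <= y) s).
Proof.
elim: s p m => [|x s IH] p m /=.
  move=> _ mp; right; exists (p - m); first by lia.
  lia.
case/andP=> xp ps mlt.
case: (ltngtP m (p - x)) => mx.
- right; exists (p - m); first by lia.
  rewrite count0 /=; first by lia.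
  apply/allP => y /= ys; move/allP: (path_all ps) => /(_ y ys) yx; lia.
- have [[a aS ma]|[j jp mj]] := IH x (m - (p - x)).-1 ps ltac:(lia).
    have al : nth 0 s a <= x by move/allP: (path_all ps); apply; rewrite mem_nth.
    left; exists a.+1 => //=; lia.
  right; exists j; first by lia.
  have jx : j <= x by lia.
  rewrite /= jx; lia.
- by left; exists 0 => //=; lia.
Qed.
End Bd.

Definition labr (lam : seq nat) i := head 0 lam - part lam i + i.
Definition cnt (lam : seq nat) j := count (fun y => j <= y) lam.
Definition labc (lam : seq nat) j := head 0 lam - j + cnt lam j + 1.

Lemma count_sorted s i j : sorted geq s ->
  (i < count (fun y => j <= y) s) = (i < size s) && (j <= nth 0 s i).
Proof.
elim: s i => [|x s IH] i //= ps.
have ps' : sorted geq s by case: s ps IH => //= y s /andP[].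
case: (leqP j x) => jx.
  rewrite add1n; case: i => [|i] //=.
  by rewrite ltnS IH.
rewrite count0 ?add0n; last first.
  by apply/allP => y ys; move/allP: (path_all ps) => /(_ y ys) yx; lia.
case: i => [|i] /=; first by apply/esym/negbTE; rewrite -ltnNge.
rewrite ltn0 ltnS; case: (ltnP i (size s)) => iS //=.
have : nth 0 s i <= x by move/allP: (path_all ps); apply; rewrite mem_nth.
move=> h; apply/esym/negbTE; rewrite -ltnNge; lia.
Qed.

Section Lam.
Variable lam : seq nat.
Hypothesis hs : sorted geq lam.

Lemma path_head : path geq (head 0 lam) lam.
Proof. by case: lam hs => //= x s ->; rewrite leqnn. Qed.

Lemma part_le_head i : part lam i <= head 0 lam.
Proof.
rewrite /part; case: (ltnP i.-1 (size lam)) => iS.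
  by move/allP: (path_all path_head); apply; rewrite mem_nth.
by rewrite nth_default.
Qed.

Lemma part_mono i i' : i <= i' -> part lam i' <= part lam i.
Proof.
move=> ii; rewrite /part; case: (ltnP i'.-1 (size lam)) => iS.
  have gtr : transitive geq by move=> a b c /= ba cb; exact: leq_trans cb ba.
  have H := @sorted_leq_nth _ geq gtr (fun a => leqnn a) 0 lam hs.
  by apply: H; rewrite ?inE /=; lia.
by rewrite (nth_default _ iS).
Qed.

Lemma cnt_le i j : 0 < i -> (i <= cnt lam j) = (i <= size lam) && (j <= part lam i).
Proof.
move=> i0; rewrite /cnt /part.
have := count_sorted i.-1 j hs.
by case: i i0 => //= i _ ->.
Qed.

Lemma cnt_mono j j' : j <= j' -> cnt lam j' <= cnt lam j.
Proof. by move=> jj; apply: sub_count => y /= /(leq_trans jj). Qed.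

Lemma cnt_size j : cnt lam j <= size lam.
Proof. exact: count_size. Qed.

Lemma size_boundary : size (boundary lam) = head 0 lam + size lam.
Proof. by rewrite boundary_bd size_bd // path_head. Qed.

Lemma seg_row i : 0 < i <= size lam -> segment lam (labr lam i) = (true, i).
Proof.
move=> iS; rewrite /segment /labr boundary_bd.
have -> : (head 0 lam - part lam i + i).-1 = head 0 lam - nth 0 lam i.-1 + i.-1.
  rewrite /part; have := part_le_head i; rewrite /part; lia.
rewrite nth_bd_row ?path_head //; first by congr (_,_); lia.
lia.
Qed.

Lemma seg_col j : 0 < j <= head 0 lam -> segment lam (labc lam j) = (false, j).
Proof.
move=> jp; rewrite /segment /labc boundary_bd addn1 /=.
by rewrite nth_bd_col ?path_head.
Qed.

Lemma seg_inv m : 0 < m <= size (boundary lam) ->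
  (exists2 i, 0 < i <= size lam & m = labr lam i) \/
  (exists2 j, 0 < j <= head 0 lam & m = labc lam j).
Proof.
rewrite size_boundary => mS.
have [[a aS ma]|[j jp mj]] := bd_inv (m := m.-1) path_head ltac:(lia).
  left; exists a.+1; first by lia.
  rewrite /labr /part /=.
  have : nth 0 lam a <= head 0 lam by have := part_le_head a.+1; rewrite /part.
  lia.
right; exists j => //; rewrite /labc /cnt; lia.
Qed.

Lemma seg_inv_row m i : 0 < m <= size (boundary lam) -> segment lam m = (true, i) ->
  0 < i <= size lam /\ m = labr lam i.
Proof.
move=> mS; have [[i' iS ->]|[j jp ->]] := seg_inv mS.
  by rewrite seg_row // => [[<-]].
by rewrite seg_col.
Qed.

Lemma seg_inv_col m j : 0 < m <= size (boundary lam) -> segment lam m = (false, j) ->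
  0 < j <= head 0 lam /\ m = labc lam j.
Proof.
move=> mS; have [[i' iS ->]|[j' jp ->]] := seg_inv mS.
  by rewrite seg_row.
by rewrite seg_col // => [[<-]].
Qed.
End Lam.

Section Conc.
Variable n : nat.
Variable lam : seq nat.
Hypothesis hs : sorted geq lam.
Hypothesis hsz : 0 < size lam.
Hypothesis hh : 0 < head 0 lam.
Hypothesis hn : head 0 lam + size lam - 1 = n.

Lemma cell_eq (u w : cell n) : (u.1 : nat) = w.1 -> (u.2 : nat) = w.2 -> u = w.
Proof. by case: u w => [a b] [c d] /= h1 h2; congr (_, _); apply: val_inj. Qed.

Lemma conn_AR k (u w : cell n) : u \in @ARk n k -> w \in @ARk n k ->
  u.1 <= w.1 -> u.2 <= w.2 -> conn (@ARk n k) (@ARedge n (cyc n)) u w.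
Proof.
move=> + wA; move: {2}(w.1 - u.1 + (w.2 - u.2)) (erefl (w.1 - u.1 + (w.2 - u.2))) => d.
elim: d u => [|d IH] u E uA h1 h2.
  have -> : u = w by apply: cell_eq; lia.
  exact: conn_refl.
move: (uA) (wA); rewrite !inE => /and3P[/andP[u10 u1k] ku2 u2n] /and3P[/andP[w10 w1k] kw2 w2n].
case: (ltnP u.2 w.2) => h3.
  have v2 : ((inord u.2.+1 : 'I_n.+2) : nat) = u.2.+1 by rewrite inordK //; lia.
  apply: (@conn_step _ _ _ _ (u.1, inord u.2.+1)).
  - have c2 : cyc n u.2 = u.2.+1 by rewrite /cyc ifT //; lia.
    apply/orP; left; rewrite /= c2 v2 !eqxx /=; lia.
  - rewrite inE v2 /=; lia.
  - apply: IH; rewrite ?v2 /=; try lia.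
    by rewrite inE v2 /=; lia.
have h4 : u.1 < w.1 by lia.
have v1 : ((inord u.1.+1 : 'I_n.+2) : nat) = u.1.+1 by rewrite inordK //; lia.
apply: (@conn_step _ _ _ _ (inord u.1.+1, u.2)).
- have c1 : cyc n u.1 = u.1.+1 by rewrite /cyc ifT //; lia.
  apply/orP; right; rewrite /= c1 v1 !eqxx /=; lia.
- rewrite inE v1 /=; lia.
- apply: IH; rewrite ?v1 /=; try lia.
  by rewrite inE v1 /=; lia.
Qed.

Lemma fer_ideal i j i' j' : inFer lam i j -> 0 < i' <= i -> 0 < j' <= j -> inFer lam i' j'.
Proof.
rewrite /inFer => /andP[/andP[i0 iS] /andP[j0 jp]] /andP[i'0 ii] /andP[j'0 jj].
have := part_mono hs ii.
move=> hp; rewrite i'0 j'0 /=; apply/andP; split; lia.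
Qed.

Lemma sq_fer k (y : cell n) : y \in @square_k n lam k ->
  [/\ 0 < y.1, y.1 <= size lam, 0 < y.2 & y.2 <= part lam y.1].
Proof.
rewrite inE => /andP[+ _]; rewrite /cinFer /inFer => /andP[/andP[-> ->] /andP[-> ->]].
by [].
Qed.

Lemma sq_ideal k (y z : cell n) : y \in @square_k n lam k ->
  0 < z.1 <= y.1 -> 0 < z.2 <= y.2 -> z \in @square_k n lam k.
Proof.
rewrite !inE => /andP[yF /existsP[x /andP[/andP[xD h1] h2]]] hz1 hz2.
apply/andP; split; first exact: fer_ideal yF hz1 hz2.
apply/existsP; exists x; rewrite xD /=; apply/andP; split; lia.
Qed.

Lemma conn_H k (u w : cell n) : u \in @square_k n lam k -> w \in @square_k n lam k ->
  w.1 <= u.1 -> u.2 <= w.2 -> conn (@square_k n lam k) (@Hedge n) u w.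
Proof.
move=> + wA; move: {2}(u.1 - w.1 + (w.2 - u.2)) (erefl (u.1 - w.1 + (w.2 - u.2))) => d.
elim: d u => [|d IH] u E uA h1 h2.
  have -> : u = w by apply: cell_eq; lia.
  exact: conn_refl.
have [u10 u1S u20 u2p] := sq_fer uA.
have [w10 w1S w20 w2p] := sq_fer wA.
have pw := part_le_head hs w.1.
case: (ltnP w.1 u.1) => h3.
  have v1 : ((inord u.1.-1 : 'I_n.+2) : nat) = u.1.-1 by rewrite inordK //; lia.
  have vA : (inord u.1.-1, u.2) \in @square_k n lam k.
    by apply: (sq_ideal uA) => /=; rewrite ?inordK; lia.
  apply: (@conn_step _ _ _ _ (inord u.1.-1, u.2)) => //.
  - apply/orP; right; rewrite /= eqxx /=; apply/eqP; rewrite inordK; lia.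
  - apply: IH => //=; rewrite ?inordK; lia.
have h4 : u.2 < w.2 by lia.
have vA : (u.1, inord u.2.+1) \in @square_k n lam k.
  by apply: (sq_ideal wA) => /=; rewrite ?inordK; lia.
apply: (@conn_step _ _ _ _ (u.1, inord u.2.+1)) => //.
- apply/orP; left; rewrite /= eqxx /=; apply/eqP; rewrite inordK; lia.
- apply: IH => //=; rewrite ?inordK; lia.
Qed.

Lemma head_le_n : head 0 lam <= n.
Proof. lia. Qed.
Lemma size_le_n : size lam <= n.
Proof. lia. Qed.

Lemma sq_char k (y : cell n) : cinFer lam y ->
  (y \in @square_k n lam k) = (labr lam y.1 <= k) && (k < labc lam y.2).
Proof.
case: y => y1 y2.
rewrite /cinFer /inFer /= => /andP[/andP[y10 y1S] /andP[y20 y2p]].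
have py := part_le_head hs y1.
have cy := cnt_size lam y2.
have hN := head_le_n; have sN := size_le_n.
rewrite /labr /labc.
apply/idP/idP.
- rewrite inE => /andP[_ /existsP[[x1 x2] /andP[/andP[xD h1] h2]]].
  move: xD h1 h2 => /=; rewrite /inD /cinFer /inFer /diagk /= => /andP[/andP[/andP[x10 x1S] /andP[x20 x2p]] /eqP xk] h1 h2.
  have px := part_le_head hs x1.
  have pxy := part_mono hs h1.
  have cx : x1 <= cnt lam x2 by rewrite cnt_le // x1S x2p.
  have cxy := cnt_mono lam h2.
  apply/andP; split; lia.
move=> /andP[h1 h2].
case: (leqP (k + y2 - head 0 lam) y1) => hc.
  have b1 : ((inord (head 0 lam + y1 - k) : 'I_n.+2) : nat) = head 0 lam + y1 - k.
    by rewrite inordK //; lia.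
  rewrite inE /cinFer /inFer y10 y1S y20 y2p /=.
  apply/existsP; exists (y1, inord (head 0 lam + y1 - k)).
  rewrite /inD /cinFer /inFer /diagk /= inordK; last by lia.
  rewrite y10 y1S /=; apply/andP; split; [apply/andP; split|]; try lia.
have ca : k + y2 - head 0 lam <= cnt lam y2 by lia.
rewrite (cnt_le hs) in ca; last by lia.
move/andP: ca => [aS ap].
rewrite inE /cinFer /inFer y10 y1S y20 y2p /=.
apply/existsP; exists (inord (k + y2 - head 0 lam), y2).
rewrite /inD /cinFer /inFer /diagk /= inordK; last by lia.
apply/andP; split; [apply/andP; split|]; try lia.
Qed.

Lemma ival i : i <= n.+1 -> ((inord i : 'I_n.+2) : nat) = i.
Proof. by move=> h; rewrite inordK. Qed.

Lemma labr_le i i' : labr lam i <= labr lam i' -> i <= i'.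
Proof.
rewrite /labr => h; case: (leqP i i') => // h'.
have := part_mono hs (ltnW h'); have := part_le_head hs i; have := part_le_head hs i'.
lia.
Qed.

Lemma labr_mono i i' : i <= i' -> labr lam i <= labr lam i'.
Proof.
rewrite /labr => h.
have := part_mono hs h; have := part_le_head hs i; have := part_le_head hs i'.
lia.
Qed.

Lemma labc_le j j' : j' <= head 0 lam -> labc lam j <= labc lam j' -> j' <= j.
Proof.
rewrite /labc => hj h; case: (leqP j' j) => // h'.
have := cnt_mono lam (ltnW h'); lia.
Qed.

Lemma labc_mono j j' : j <= j' -> labc lam j' <= labc lam j.
Proof.
rewrite /labc => h; have := cnt_mono lam h; lia.
Qed.

Definition phi (y : cell n) : cell n := (inord (labr lam y.1), inord (labc lam y.2)).

Lemma phi_vals (y : cell n) : cinFer lam y ->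
  ((phi y).1 : nat) = labr lam y.1 /\ ((phi y).2 : nat) = labc lam y.2.
Proof.
case: y => y1 y2; rewrite /cinFer /inFer /= => /andP[/andP[y10 y1S] /andP[y20 y2p]].
have := part_le_head hs y1; have := cnt_size lam y2.
rewrite /labr /labc => h1 h2.
by split; apply: ival; lia.
Qed.

Variable f : nat * nat -> nat.

Lemma rep_sq k (y : cell n) : y \in @square_k n lam k ->
  rep lam f (labr lam y.1) (labc lam y.2) = f (nat_of_ord y.1, nat_of_ord y.2).
Proof.
move=> yA; have [y10 y1S y20 y2p] := sq_fer yA.
have yF : cinFer lam y by move: yA; rewrite inE => /andP[].
move: yA; rewrite sq_char // => /andP[h1 h2].
have := part_le_head hs y.1; have := cnt_size lam y.2 => h3 h4.
rewrite /rep size_boundary // ifT; last first.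
  apply/andP; split; [apply/andP; split|]; rewrite /labr /labc in h1 h2 *; lia.
by rewrite seg_row ?y10 ?y1S // seg_col // y20 /=; lia.
Qed.

Definition psi (v : cell n) : cell n :=
  match segment lam v.1, segment lam v.2 with
  | (true, i), (false, j) => (inord i, inord j)
  | _, _ => v
  end.

Lemma psi_spec (v : cell n) : rep lam f v.1 v.2 != 0 ->
  exists i j, [/\ (0 < i <= size lam) && (0 < j <= part lam i),
     (v.1 : nat) = labr lam i, (v.2 : nat) = labc lam j,
     psi v = (inord i, inord j) & rep lam f v.1 v.2 = f (i, j)].
Proof.
rewrite /rep; case: ifP => [/andP[/andP[v10 v12] v2B] | _]; last by rewrite eqxx.
rewrite /psi.
case E1: (segment lam v.1) => [[] i]; case E2: (segment lam v.2) => [[] j]; rewrite ?eqxx // => fij.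
have [/andP[i0 iS] e1] := seg_inv_row hs (m := v.1) ltac:(lia) E1.
have [/andP[j0 jh] e2] := seg_inv_col hs (m := v.2) ltac:(lia) E2.
exists i, j; split => //.
rewrite i0 iS j0 /=.
case: (leqP j (part lam i)) => // hp.
have c : (i <= cnt lam j) = false by rewrite (cnt_le hs) // [j <= _]leqNgt hp andbF.
move/negbT: c; rewrite -ltnNge => c.
have := part_le_head hs i.
rewrite /labr /labc in e1 e2; lia.
Qed.

Lemma phi_AR k (y : cell n) : y \in @square_k n lam k -> phi y \in @ARk n k.
Proof.
move=> yA; have [y10 y1S y20 y2p] := sq_fer yA.
have yF : cinFer lam y by move: yA; rewrite inE => /andP[].
have [p1 p2] := phi_vals yF.
move: yA; rewrite sq_char // => /andP[h1 h2].
have := part_le_head hs y.1; have := cnt_size lam y.2 => h3 h4.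
rewrite inE p1 p2; rewrite /labr /labc in h1 h2 *.
apply/andP; split; [apply/andP; split|apply/andP; split]; lia.
Qed.

Lemma psi_sq k (v : cell n) : v \in @ARk n k -> rep lam f v.1 v.2 != 0 ->
  psi v \in @square_k n lam k.
Proof.
move=> vA /psi_spec [i [j [/andP[/andP[i0 iS] /andP[j0 jp]] e1 e2 -> _]]].
have := part_le_head hs i => ph.
move: vA; rewrite inE => /andP[/andP[v10 v1k] /andP[kv2 v2n]].
rewrite sq_char /cinFer /inFer /= !ival; try lia.
Qed.

Lemma dir1 k t : 0 < k <= n ->
  GK_M (@square_k n lam k) (@Hedge n) (fun y : cell n => f (nat_of_ord y.1, nat_of_ord y.2)) t <=
  GK_M (@ARk n k) (@ARedge n (cyc n)) (fun y : cell n => rep lam f y.1 y.2) t.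
Proof.
move=> hk.
apply: (GK_M_mono (phi := phi)).
- apply: (transfer (O := fun a b : cell n => (b.1 <= a.1) && (a.2 <= b.2)) (a0 := (inord k, inord k.+1))).
  + move=> b a c /andP[h1 h2] /andP[h3 h4]; apply/andP; split; lia.
  + rewrite inE /= !ival; lia.
  + move=> [a1 a2] [b1 b2] _ _ /= /orP[/andP[/eqP e1 /eqP e2]|/andP[/eqP e1 /eqP e2]] /=;
    move: e1 e2 => /= e1 e2; apply/andP; split; lia.
  + by move=> y yA _; apply: phi_AR.
  + move=> a b aA bA _ _ /andP[h1 h2]; apply: conn_AR; try exact: phi_AR.
    * have aF : cinFer lam a by move: aA; rewrite inE => /andP[].
      have bF : cinFer lam b by move: bA; rewrite inE => /andP[].
      have [pa1 pa2] := phi_vals aF; have [pb1 pb2] := phi_vals bF.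
      by rewrite pa1 pb1; apply: labr_mono.
    * have aF : cinFer lam a by move: aA; rewrite inE => /andP[].
      have bF : cinFer lam b by move: bA; rewrite inE => /andP[].
      have [pa1 pa2] := phi_vals aF; have [pb1 pb2] := phi_vals bF.
      by rewrite pa2 pb2; apply: labc_mono.
- move=> [a1 a2] [b1 b2] /andP[aA _] /andP[bA _] e.
  have aF : cinFer lam (a1, a2) by move: aA; rewrite inE => /andP[].
  have bF : cinFer lam (b1, b2) by move: bA; rewrite inE => /andP[].
  have [pa1 pa2] := phi_vals aF; have [pb1 pb2] := phi_vals bF.
  have [_ _ _ a2p] := sq_fer aA; have [_ _ _ b2p] := sq_fer bA.
  have e1 : labr lam (a1, a2).1 = labr lam (b1, b2).1 by rewrite -pa1 -pb1 e.
  have e2 : labc lam (a1, a2).2 = labc lam (b1, b2).2 by rewrite -pa2 -pb2 e.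
  move: e1 e2 a2p b2p => /= e1 e2 a2p b2p.
  have := part_le_head hs a1; have := part_le_head hs b1 => hb ha.
  apply: cell_eq => /=.
  + apply/eqP; rewrite eqn_leq; apply/andP; split; apply: labr_le; by rewrite e1.
  + apply/eqP; rewrite eqn_leq; apply/andP; split; apply: labc_le; rewrite ?e2 //; lia.
- move=> y yA _.
  have yF : cinFer lam y by move: yA; rewrite inE => /andP[].
  have [p1 p2] := phi_vals yF.
  by rewrite /= p1 p2 (rep_sq yA).
Qed.

Lemma dir2 k t (x0 : cell n) : x0 \in @square_k n lam k ->
  GK_M (@ARk n k) (@ARedge n (cyc n)) (fun y : cell n => rep lam f y.1 y.2) t <=
  GK_M (@square_k n lam k) (@Hedge n) (fun y : cell n => f (nat_of_ord y.1, nat_of_ord y.2)) t.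
Proof.
move=> x0A.
apply: (GK_M_mono (phi := psi)).
- apply: (transfer (O := fun a b : cell n => (a.1 <= b.1) && (a.2 <= b.2)) (a0 := x0)) => //.
  + move=> b a c /andP[h1 h2] /andP[h3 h4]; apply/andP; split; lia.
  + move=> [a1 a2] [b1 b2]; rewrite !inE /= => /andP[/andP[a10 a1k] /andP[ka2 a2n]]
      /andP[/andP[b10 b1k] /andP[kb2 b2n]] /orP[/andP[/andP[/eqP e1 /eqP e2] h]|/andP[/andP[/eqP e1 /eqP e2] h]];
    move: e1 e2 h; rewrite /cyc /=; case: (leqP a2 n) => hc2; case: (leqP a1 n) => hc1 e1 e2 h; apply/andP; split; lia.
  + by move=> v vA gv; apply: psi_sq.
  + move=> a b aA bA ga gb /andP[h1 h2].
    apply: conn_H; try exact: psi_sq.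
    * have [i [j [/andP[/andP[i0 iS] /andP[j0 jp]] ea1 ea2 -> _]]] := psi_spec ga.
      have [i' [j' [/andP[/andP[i0' iS'] /andP[j0' jp']] eb1 eb2 -> _]]] := psi_spec gb.
      rewrite /= !ival; try lia.
      by apply: labr_le; rewrite -ea1 -eb1.
    * have [i [j [/andP[/andP[i0 iS] /andP[j0 jp]] ea1 ea2 -> _]]] := psi_spec ga.
      have [i' [j' [/andP[/andP[i0' iS'] /andP[j0' jp']] eb1 eb2 -> _]]] := psi_spec gb.
      have := part_le_head hs i; have := part_le_head hs i' => hi' hi.
      rewrite /= !ival; try lia.
      by apply: labc_le; [lia | rewrite -ea2 -eb2].
- move=> a b /andP[aA ga] /andP[bA gb] e.
  have [i [j [/andP[/andP[i0 iS] /andP[j0 jp]] ea1 ea2 pa _]]] := psi_spec ga.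
  have [i' [j' [/andP[/andP[i0' iS'] /andP[j0' jp']] eb1 eb2 pb _]]] := psi_spec gb.
  have := part_le_head hs i; have := part_le_head hs i' => hi' hi.
  move: e; rewrite pa pb => [[/(congr1 (@nat_of_ord _)) + /(congr1 (@nat_of_ord _))]] /=.
  rewrite !ival; try lia.
  move=> ii jj; apply: cell_eq; by rewrite ?ea1 ?eb1 ?ea2 ?eb2 ?ii ?jj.
- move=> v vA gv.
  have [i [j [/andP[/andP[i0 iS] /andP[j0 jp]] ea1 ea2 pa ->]]] := psi_spec gv.
  have := part_le_head hs i => hi.
  by rewrite pa /= !ival //; lia.
Qed.
End Conc.

Theorem proposition6p5 (n : nat) (lam : seq nat) :
  1 <= n -> is_partition lam -> head 0 lam + size lam - 1 = n ->
  forall (f : nat * nat -> nat) (x : cell n),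
    cinFer lam x -> @RSK n lam (cyc n) f x = @HG n lam f x.
Proof.
move=> n1 /andP[hs _] hn f x xF.
have [/andP[x10 x1S] /andP[x20 x2p]] := andP xF.
have px := part_le_head hs x.1.
have hsz : 0 < size lam by lia.
have hh : 0 < head 0 lam by lia.
have xA : x \in @square_k n lam (coord_k lam x).
  rewrite inE xF /=; apply/existsP; exists x; rewrite !leqnn !andbT.
  by rewrite /inD xF /= /coord_k eqxx.
have hk : 0 < coord_k lam x <= n by rewrite /coord_k /diagk; lia.
rewrite /RSK /HG /GK_part.
have E : forall t, GK_M (@ARk n (coord_k lam x)) (@ARedge n (cyc n))
     (fun y : cell n => rep lam f y.1 y.2) t =
   GK_M (@square_k n lam (coord_k lam x)) (@Hedge n)
     (fun y : cell n => f (nat_of_ord y.1, nat_of_ord y.2)) t.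
  move=> t; apply/eqP; rewrite eqn_leq.
  by rewrite (dir2 hs hsz hh hn f t xA) (dir1 hs hsz hh hn f t hk).
by rewrite !E.
Qed.
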